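(* Let $\mathcal R$ be a CCTRS, let $\rho\colon \ell\to r\Leftarrow c$ be a rule of $\mathcal R$, and let $s$ be an instance of $\ell$. Suppose $s\to_{\mathcal R}^* t$ using only steps at non-root positions, and suppose $t\to_{\mathcal R} u$ by a step with rule $\rho$ at the root position. Then there exists a term $v$ such that $s\to_{\mathcal R} v$ by a step with rule $\rho$ at the root position and $v\to_{\mathcal R}^* u$.
   Context: Terms are built from a signature $\mathcal F$ and variables $\mathcal V$. An (oriented) conditional rewrite rule has the form $\ell\to r\Leftarrow a_1\approx b_1,\dots,a_k\approx b_k$ with $k\ge 0$. For a set $\mathcal R$ of such rules, $\to_{\mathcal R}=\bigcup_{i}\to_{\mathcal R_i}$ where $\mathcal R_0=\emptyset$ and $\mathcal R_{i+1}=\{\ell\sigma\to r\sigma\mid (\ell\to r\Leftarrow c)\in\mathcal R,\ a_j\sigma\to^*_{\mathcal R_i}b_j\sigma \text{ for all } j\}$; equivalently $s\to t$ iff there are a position $p$, a rule and a substitution $\sigma$ with $s|_p=\ell\sigma$, $t=s[r\sigma]_p$ and $a_j\sigma\to^*b_j\sigma$ for all $j$ (written $\mathcal R\vdash c\sigma$). Defined symbols are the root symbols of left-hand sides; all other symbols are constructors; constructor terms contain only constructors and variables. A CCTRS is such a system in which every rule has the form $f(\ell_1,\dots,\ell_n)\to r\Leftarrow a_1\approx b_1,\dots,a_k\approx b_k$ where $\ell_1,\dots,\ell_n,b_1,\dots,b_k$ are constructor terms, the terms $f(\ell_1,\dots,\ell_n),b_1,\dots,b_k$ pairwise have no common variables,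 $\mathrm{Var}(r)\subseteq\mathrm{Var}(\ell_1,\dots,\ell_n,b_1,\dots,b_k)$, and $\mathrm{Var}(a_i)\subseteq\mathrm{Var}(\ell_1,\dots,\ell_n,b_1,\dots,b_{i-1})$ for all $1\le i\le k$. *)

(* Defs.v *)
From Stdlib Require Import List Relations.
Import ListNotations.
Set Implicit Arguments.

Section Terms.
Variables F V : Type.

(* Terms over function symbols F and variables V (argument lists are
   unconstrained, i.e. symbols may be used with any number of arguments). *)
Inductive term : Type :=
| Var : V -> term
| Fun : F -> list term -> term.

Fixpoint subst (sigma : V -> term) (t : term) : term :=
  match t with
  | Var x => sigma x
  | Fun f ts => Fun f (map (subst sigma) ts)
  end.

Fixpoint vars (t : term) : list V :=
  match t with
  | Var x => [x]
  | Fun f ts => flat_map vars ts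
  end.

Fixpoint funs (t : term) : list F :=
  match t with
  | Var _ => []
  | Fun f ts => f :: flat_map funs ts
  end.

(* Positions are lists of (0-based) argument indices; [] is the root. *)
Fixpoint subterm_at (t : term) (p : list nat) : option term :=
  match p with
  | [] => Some t
  | i :: p' =>
      match t with
      | Var _ => None
      | Fun f ts =>
          match nth_error ts i with
          | Some ti => subterm_at ti p'
          | None => None
          end
      end
  end.

Fixpoint replace_at (t : term) (p : list nat) (u : term) : term :=
  match p with
  | [] => u
  | i :: p' =>
      match t with
      | Var _ => t
      | Fun f ts =>
          match nth_error ts i with
          | Some ti => Fun f (firstn i ts ++ replace_at ti p' u :: skipn (S i) ts)
          | None => t
          end
      end
  end.

Record rule : Type := mkRule {
  lhs : term;
  rhs : term;
  conds : list (term * term)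
}.

Definition step_with (Q : relation term) (R : rule -> Prop) (p : list nat)
  (rho : rule) (s t : term) : Prop :=
  R rho /\
  exists sigma : V -> term,
    subterm_at s p = Some (subst sigma (lhs rho)) /\
    t = replace_at s p (subst sigma (rhs rho)) /\
    (forall a b, In (a, b) (conds rho) -> Q (subst sigma a) (subst sigma b)).

Fixpoint step_n (R : rule -> Prop) (n : nat) (s t : term) : Prop :=
  match n with
  | 0 => False
  | S n' => exists p rho, step_with (clos_refl_trans term (step_n R n')) R p rho s t
  end.

Definition step_at (R : rule -> Prop) (p : list nat) (rho : rule) (s t : term) : Prop :=
  exists n, step_with (clos_refl_trans term (step_n R n)) R p rho s t.

Definition step (R : rule -> Prop) (s t : term) : Prop :=
  exists p rho, step_at R p rho s t.

Definition nonroot_step (R : rule -> Prop) (s t : term) : Prop :=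
  exists p rho, p <> [] /\ step_at R p rho s t.

Definition defined (R : rule -> Prop) (f : F) : Prop :=
  exists rho ts, R rho /\ lhs rho = Fun f ts.

Definition constructor_term (R : rule -> Prop) (t : term) : Prop :=
  forall f, In f (funs t) -> ~ defined R f.

Definition pairwise_var_disjoint (L : list term) : Prop :=
  forall i j ti tj, i <> j -> nth_error L i = Some ti -> nth_error L j = Some tj ->
    forall x, In x (vars ti) -> ~ In x (vars tj).

Definition CCTRS (R : rule -> Prop) : Prop :=
  forall rho, R rho ->
    exists f ls,
      lhs rho = Fun f ls /\
      Forall (constructor_term R) ls /\
      Forall (constructor_term R) (map snd (conds rho)) /\
      pairwise_var_disjoint (lhs rho :: map snd (conds rho)) /\
      incl (vars (rhs rho))
           (flat_map vars ls ++ flat_map vars (map snd (conds rho))) /\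
      (forall i a b, nth_error (conds rho) i = Some (a, b) ->
         incl (vars a)
              (flat_map vars ls ++ flat_map vars (map snd (firstn i (conds rho))))).

End Terms.

Arguments Var {F V} _.
Arguments Fun {F V} _ _.

(* Main.v *)
Require Import Defs.
From Stdlib Require Import List Relations Arith Lia ClassicalEpsilon.
Import ListNotations.
Set Implicit Arguments.

Section L.
Variables F V : Type.
Variable R : rule F V -> Prop.
Notation term := (term F V).
Notation rt := (clos_refl_trans term).

Lemma term_ind' (P : term -> Prop) :
  (forall x, P (Var x)) ->
  (forall f ls, Forall P ls -> P (Fun f ls)) -> forall t, P t.
Proof.
  intros HV HF.
  refine (fix IH t := match t with Var x => HV x | Fun f ls => HF f ls
    ((fix go l := match l return Forall P l with [] => Forall_nil _
       | a :: l' => Forall_cons _ (IH a) (go l') end) ls) end).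
Qed.

Lemma rt_mono (A:Type) (r1 r2 : relation A) : (forall a b, r1 a b -> r2 a b) ->
  forall a b, clos_refl_trans A r1 a b -> clos_refl_trans A r2 a b.
Proof. intros H a b Hr; induction Hr; eauto using rt_step, rt_refl, rt_trans. Qed.

Lemma step_with_mono (Q1 Q2 : relation term) p rho s t :
  (forall a b, Q1 a b -> Q2 a b) -> step_with Q1 R p rho s t -> step_with Q2 R p rho s t.
Proof. intros H [HR [sg [H1 [H2 H3]]]]. split; [exact HR|]. exists sg. repeat split; auto. Qed.

Lemma step_n_mono : forall n m a b, n <= m -> step_n R n a b -> step_n R m a b.
Proof.
  induction n; intros m a b Hle H; [simpl in H; destruct H|].
  destruct m as [|m]; [lia|].
  simpl in H. destruct H as [p [rho Hs]]. simpl. exists p, rho.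
  eapply step_with_mono; [|exact Hs].
  apply rt_mono. intros; apply IHn with (m:=m); [lia|assumption].
Qed.

Lemma step_n_step n a b : step_n R n a b -> step R a b.
Proof.
  destruct n; simpl; [intros []|]. intros [p [rho Hs]]. exists p, rho, n. exact Hs.
Qed.

Lemma rt_level a b : rt (step R) a b -> exists n, rt (step_n R n) a b.
Proof.
  induction 1 as [x y [p [rho [n Hs]]]| x | x y z _ [n1 H1] _ [n2 H2]].
  - exists (S n). apply rt_step. simpl. exists p, rho. exact Hs.
  - exists 0. apply rt_refl.
  - exists (max n1 n2). eapply rt_trans.
    + eapply rt_mono; [|exact H1]. intros; eapply step_n_mono; [|eassumption]; lia.
    + eapply rt_mono; [|exact H2]. intros; eapply step_n_mono; [|eassumption]; lia.
Qed.

Lemma step_ctx p rho i ts ti ti' f : nth_error ts i = Some ti -> step_at R p rho ti ti' ->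
  step_at R (i::p) rho (Fun f ts) (Fun f (firstn i ts ++ ti' :: skipn (S i) ts)).
Proof.
  intros Hn [n [HR [sg [H1 [H2 H3]]]]]. exists n. split; [exact HR|]. exists sg.
  simpl. rewrite Hn. split; [exact H1|]. split; [subst ti'; reflexivity| exact H3].
Qed.

Lemma step_dec p rho i f ts w : step_at R (i::p) rho (Fun f ts) w ->
  exists ti ti', nth_error ts i = Some ti /\ step_at R p rho ti ti' /\
    w = Fun f (firstn i ts ++ ti' :: skipn (S i) ts).
Proof.
  intros [n [HR [sg [H1 [H2 H3]]]]]. simpl in H1, H2.
  destruct (nth_error ts i) as [ti|] eqn:E; [|discriminate].
  exists ti, (replace_at ti p (subst sg (rhs rho))). split; [reflexivity|]. split; [|exact H2].
  exists n. split; [exact HR|]. exists sg. auto.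
Qed.

Lemma nth_pre (A:Type) (pre : list A) x ts : nth_error (pre ++ x :: ts) (length pre) = Some x.
Proof. induction pre; simpl; auto. Qed.
Lemma firstn_len (A:Type) (pre l : list A) : firstn (length pre) (pre ++ l) = pre.
Proof. induction pre; simpl; f_equal; auto. Qed.
Lemma skipn_len (A:Type) (pre : list A) x l : skipn (S (length pre)) (pre ++ x :: l) = l.
Proof. induction pre; simpl; auto. Qed.

Lemma rt_args f : forall ts ts', Forall2 (rt (step R)) ts ts' ->
  forall pre, rt (step R) (Fun f (pre ++ ts)) (Fun f (pre ++ ts')).
Proof.
  induction 1 as [|a a' ts ts' Ha _ IH]; intros pre; [apply rt_refl|].
  apply rt_trans with (Fun f (pre ++ a' :: ts)).
  - clear IH. induction Ha as [x y Hxy| x | x y z _ IH1 _ IH2].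
    + apply rt_step. destruct Hxy as [p [rho Hs]]. exists (length pre :: p), rho.
      pose proof (@step_ctx p rho (length pre) (pre ++ x :: ts) x y f (nth_pre pre x ts) Hs) as H.
      rewrite firstn_len, skipn_len in H. exact H.
    + apply rt_refl.
    + eapply rt_trans; eauto.
  - specialize (IH (pre ++ [a'])). rewrite <- !app_assoc in IH. exact IH.
Qed.

Lemma rt_subst (sg tau : V -> term) : (forall x, rt (step R) (sg x) (tau x)) ->
  forall t, rt (step R) (subst sg t) (subst tau t).
Proof.
  intros H t. induction t as [x|f ls IH] using term_ind'; [apply H|].
  simpl. apply (rt_args f) with (pre := []).
  induction IH; simpl; constructor; auto.
Qed.

Lemma subst_ext (s1 s2 : V -> term) t : (forall x, In x (vars t) -> s1 x = s2 x) ->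
  subst s1 t = subst s2 t.
Proof.
  induction t as [x|f ls IH] using term_ind'; intros H; simpl.
  - apply H; simpl; auto.
  - f_equal. apply map_ext_in. intros l Hl. rewrite Forall_forall in IH. apply IH; auto.
    intros x Hx; apply H. simpl. apply in_flat_map. eauto.
Qed.

Lemma Forall2_upd (A B:Type) (P : A -> B -> Prop) : forall ls ts i ti ti',
  Forall2 P ls ts -> nth_error ts i = Some ti ->
  (forall li, nth_error ls i = Some li -> P li ti -> P li ti') ->
  Forall2 P ls (firstn i ts ++ ti' :: skipn (S i) ts).
Proof.
  intros ls ts i ti ti' H; revert i; induction H as [|l t ls ts Hlt H2 IH];
    intros [|i] Hn Hup; simpl in *; try discriminate.
  - injection Hn as ->. constructor; [apply Hup; auto | assumption].
  - constructor; [assumption|]. apply IH; auto.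
Qed.

Lemma Forall2_map_in (A B:Type) (P : A -> B -> Prop) (f : A -> B) : forall ls,
  Forall2 P ls (map f ls) -> forall l, In l ls -> P l (f l).
Proof.
  induction ls; simpl; intros H l Hin; [destruct Hin|]. inversion H; subst.
  destruct Hin as [->|Hin]; auto.
Qed.

Lemma redex_root (HC : CCTRS R) rho w w' : step_at R [] rho w w' ->
  exists g ts, w = Fun g ts /\ defined R g.
Proof.
  intros [n [HR [sg' [H1 _]]]]. destruct (HC rho HR) as [g [ls [Hl _]]].
  simpl in H1. injection H1 as ->. rewrite Hl. simpl.
  exists g, (map (subst sg') ls). split; [reflexivity|]. exists rho, ls. auto.
Qed.

Lemma conds_level (cs : list (term*term)) (A : term -> term) :
  (forall a b, In (a,b) cs -> rt (step R) (A a) (A b)) ->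
  exists N, forall a b, In (a,b) cs -> rt (step_n R N) (A a) (A b).
Proof.
  induction cs as [|[a0 b0] cs IH]; intros H.
  - exists 0. intros a b [].
  - destruct (rt_level (H a0 b0 (or_introl eq_refl))) as [n0 H0].
    destruct IH as [N HN]. { intros; apply H; right; auto. }
    exists (max n0 N). intros a b [E|Hin].
    + injection E as <- <-. eapply rt_mono; [|exact H0].
      intros; eapply step_n_mono; [|eassumption]; lia.
    + eapply rt_mono; [|exact (HN a b Hin)].
      intros; eapply step_n_mono; [|eassumption]; lia.
Qed.

Section G.
Variable sg : V -> term.
Inductive gi : term -> term -> Prop :=
| giV x w : rt (step R) (sg x) w -> gi (Var x) w
| giF c ls ts : Forall2 gi ls ts -> gi (Fun c ls) (Fun c ts).

Lemma gi_refl : forall l, gi l (subst sg l).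
Proof.
  intro l; induction l as [x|f ls IH] using term_ind'; simpl; constructor.
  - apply rt_refl.
  - induction IH; simpl; constructor; auto.
Qed.

Lemma gi_step (HC : CCTRS R) : forall l, constructor_term R l ->
  forall w w', gi l w -> step R w w' -> gi l w'.
Proof.
  intro l; induction l as [x|c ls IH] using term_ind'; intros Hc w w' Hg [p [rho Hs]].
  - inversion Hg; subst. constructor. eapply rt_trans; [eassumption|].
    apply rt_step. exists p, rho; exact Hs.
  - inversion Hg as [|c' ls' ts Hf]; subst.
    destruct p as [|i p].
    + destruct (redex_root HC Hs) as [g [ts' [E Hd]]]. injection E as -> _. exfalso.
      apply (Hc g); [simpl; left; reflexivity| exact Hd].
    + destruct (step_dec Hs) as [ti [ti' [Hn [Hs' ->]]]]. constructor.
      eapply Forall2_upd; [exact Hf | exact Hn |].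
      intros li Hli Hg'. rewrite Forall_forall in IH.
      apply IH with ti; [eapply nth_error_In; eauto | | exact Hg' | exists p, rho; exact Hs'].
      intros g Hg2. apply Hc. simpl. right. apply in_flat_map. exists li.
      split; [eapply nth_error_In; eauto| exact Hg2].
Qed.

Lemma gi_vars (tau : V -> term) : forall l w, gi l w -> w = subst tau l ->
  forall x, In x (vars l) -> rt (step R) (sg x) (tau x).
Proof.
  intro l; induction l as [y|c ls IH] using term_ind'; intros w Hg Hw x Hx.
  - simpl in Hx. destruct Hx as [<-|[]]. inversion Hg; subst; assumption.
  - subst w. simpl in Hg. inversion Hg as [|c' ls' ts Hf Hc1 Hc2]; subst.
    simpl in Hx. apply in_flat_map in Hx as [li [Hli Hx]].
    rewrite Forall_forall in IH. eapply IH; [exact Hli | | reflexivity | exact Hx].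
    exact (@Forall2_map_in _ _ gi (subst tau) ls Hf li Hli).
Qed.

Lemma top_pres (HC: CCTRS R) f ls : Forall (constructor_term R) ls ->
  forall w w', rt (nonroot_step R) w w' ->
  (exists ts, w = Fun f ts /\ Forall2 gi ls ts) -> exists ts, w' = Fun f ts /\ Forall2 gi ls ts.
Proof.
  intros Hc w w' H. induction H as [x y [p [rho [Hp Hs]]] | x | x y z _ IH1 _ IH2]; auto.
  intros [ts [-> Hf]]. destruct p as [|i p]; [congruence|].
  destruct (step_dec Hs) as [ti [ti' [Hn [Hs' ->]]]]. eexists; split; [reflexivity|].
  eapply Forall2_upd; [exact Hf|exact Hn|]. intros li Hli Hg. eapply gi_step; eauto.
  - rewrite Forall_forall in Hc. apply Hc. eapply nth_error_In; eauto.
  - exists p, rho; exact Hs'.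
Qed.
End G.
End L.

Theorem lemma3p1 (F V : Type) (R : rule F V -> Prop) (rho : rule F V)
  (s t u : term F V) :
  CCTRS R ->
  R rho ->
  (exists sigma : V -> term F V, s = subst sigma (lhs rho)) ->
  clos_refl_trans (term F V) (nonroot_step R) s t ->
  step_at R [] rho t u ->
  exists v : term F V,
    step_at R [] rho s v /\ clos_refl_trans (term F V) (step R) v u.
Proof.
  intros HC HR [sg Hs] Hst [n [_ [tau [Ht [Hu Hcond]]]]].
  simpl in Ht, Hu. injection Ht as Ht.
  destruct (HC rho HR) as [f [ls [Hl [Hcl [_ [Hdisj _]]]]]].
  assert (Htop : exists ts, t = Fun f ts /\ Forall2 (gi R sg) ls ts).
  { apply (top_pres HC Hcl Hst). exists (map (subst sg) ls). split.
    - rewrite Hs, Hl; reflexivity.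
    - clear -ls. induction ls; simpl; constructor; auto using gi_refl. }
  destruct Htop as [ts [Ht' Hf]].
  assert (Hx : forall x, In x (vars (lhs rho)) ->
            clos_refl_trans _ (step R) (sg x) (tau x)).
  { intros x Hx. eapply gi_vars with (w := t); [| exact Ht | exact Hx].
    rewrite Hl, Ht'. constructor. exact Hf. }
  set (sg' := fun x => if excluded_middle_informative (In x (vars (lhs rho)))
                       then sg x else tau x).
  assert (Hall : forall x, clos_refl_trans _ (step R) (sg' x) (tau x)).
  { intro x; unfold sg'; destruct excluded_middle_informative; auto using rt_refl. }
  assert (Hs' : s = subst sg' (lhs rho)).
  { rewrite Hs. apply subst_ext. intros x Hin. unfold sg'.
    destruct excluded_middle_informative; tauto. }
  assert (Hc' : forall a b, In (a,b) (conds rho) ->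
            clos_refl_trans _ (step R) (subst sg' a) (subst sg' b)).
  { intros a b Hin.
    assert (E : subst sg' b = subst tau b).
    { apply subst_ext. intros x Hxb. unfold sg'.
      destruct excluded_middle_informative as [Hxl|]; [|reflexivity]. exfalso.
      destruct (In_nth_error _ _ Hin) as [k Hk].
      assert (Hk' : nth_error (map snd (conds rho)) k = Some b).
      { rewrite nth_error_map, Hk. reflexivity. }
      exact (Hdisj 0 (S k) (lhs rho) b ltac:(discriminate) eq_refl Hk' x Hxl Hxb). }
    rewrite E. eapply rt_trans; [apply rt_subst; exact Hall|].
    eapply rt_mono; [|exact (Hcond a b Hin)]. apply step_n_step. }
  destruct (conds_level _ _ Hc') as [N HN].
  exists (subst sg' (rhs rho)). split.
  - exists N. split; [exact HR|]. exists sg'. simpl.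
    split; [rewrite Hs'; reflexivity|]. split; [reflexivity|]. exact HN.
  - rewrite Hu. apply rt_subst; exact Hall.
Qed.
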